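(* Let $b$ be a block and $r$ a round. If in round $r$ there are $2f+1$ blocks from distinct validators that are certificates for $b$, then every (valid) block of every round $r'>r$ has a path to some round-$r$ certificate for $b$.
   Context: There are $n=3f+1$ validators, at most $f$ Byzantine. Blocks are organized in rounds; every valid block of round $r$ has as parents (hash references) at least $2f+1$ blocks of round $r-1$ from distinct validators (and possibly earlier blocks). There is a path from $b$ to $b'$ if $b'$ is reached from $b$ by repeatedly following parent references. A block $b$ of round $r'$ is a vote for a block $L$ of round $r<r'$ with author $a$ if the first block with author $a$ and round $r$ encountered in the deterministic depth-first search from $b$ along parent references is $L$. For a fixed wave length $w\ge 4$, a block $c$ of round $r+w-1$ is a certificate for a block $L$ of round $r$ if at least $2f+1$ of $c$'s parents (round $r+w-2$ blocks) are votes for $L$. *)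

(* Defs.v *)
From mathcomp Require Import all_boot.
Set Implicit Arguments. Unset Strict Implicit. Unset Printing Implicit Defensive.

Section Dag.
Variables (f : nat) (Block : eqType).
Variables (author : Block -> 'I_(3 * f + 1)) (round : Block -> nat)
          (parents : Block -> seq Block).

Inductive path_to : Block -> Block -> Prop :=
| path_refl x : path_to x x
| path_step x p y : p \in parents x -> path_to p y -> path_to x y.

(* Deterministic depth-first (preorder) search from x along the parent
   lists (in list order), returning the first block satisfying P.
   [fuel] bounds the depth; since parents have strictly smaller rounds,
   fuel = round x explores the whole past of x. *)
Fixpoint dfs_find (fuel : nat) (P : pred Block) (x : Block) : option Block :=
  if P x then Some x else
  match fuel with
  | 0 => None
  | k.+1 => foldr (fun p acc => match dfs_find k P p with
                                | Some y => Some y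
                                | None => acc end) None (parents x)
  end.

Definition vote (v L : Block) : bool :=
  (round L < round v) &&
  (dfs_find (round v)
     (fun y => (author y == author L) && (round y == round L)) v == Some L).

Definition certificate (w : nat) (c L : Block) : bool :=
  (round c == round L + w - 1) &&
  (2 * f + 1 <= size (undup [seq p <- parents c |
                               (round p == round L + w - 2) && vote p L])).

Definition dag_ok (valid : pred Block) (byz : {set 'I_(3 * f + 1)}) : Prop :=
  [/\ #|byz| <= f,
      forall x p, valid x -> p \in parents x -> valid p,
      forall x p, valid x -> p \in parents x -> round p < round x,
      forall x, valid x -> 0 < round x ->
        2 * f + 1 <= size (undup [seq author p |
                             p <- parents x & round p == (round x).-1])
    &
      forall x y, valid x -> valid y -> author x = author y ->
        author x \notin byz -> round x = round y -> x = y].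

End Dag.

(* Main.v *)
Require Import Defs.
From mathcomp Require Import all_boot.
From mathcomp Require Import zify.

Lemma common_honest (n : nat) (A B : seq 'I_n) (byz : {set 'I_n}) (f : nat) :
  n <= 3 * f + 1 -> #|byz| <= f -> uniq A -> uniq B ->
  2 * f + 1 <= size A -> 2 * f + 1 <= size B ->
  exists a, [/\ a \in A, a \in B & a \notin byz].
Proof.
move=> hn hb uA uB sA sB.
set SA := [set a in A]; set SB := [set a in B].
have cA : #|SA| = size A by rewrite cardsE; apply/card_uniqP.
have cB : #|SB| = size B by rewrite cardsE; apply/card_uniqP.
have hU := cardsU SA SB.
have hT : #|SA :|: SB| <= n by have := max_card (mem (SA :|: SB)); rewrite card_ord.
case: (boolP [exists a, (a \in SA :&: SB) && (a \notin byz)]).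
  move/existsP=> [a /andP [ha hnb]]; exists a.
  by move: ha; rewrite !inE => /andP [-> ->].
move=> hne.
have hs : SA :&: SB \subset byz.
  apply/subsetP=> a ha; apply: contraT => hnb; case/negP: hne.
  by apply/existsP; exists a; rewrite ha hnb.
have := subset_leq_card hs.
have := subset_leq_card (subsetIl SA SB).
move=> hh hh2; have hh3 := leq_trans hh2 hb; exfalso; lia.
Qed.

Theorem lemma1 (f : nat) (Block : eqType) (author : Block -> 'I_(3 * f + 1))
  (round : Block -> nat) (parents : Block -> seq Block)
  (valid : pred Block) (byz : {set 'I_(3 * f + 1)}) (w : nat)
  (b : Block) (r : nat) (C : seq Block) :
  dag_ok author round parents valid byz ->
  4 <= w ->
  2 * f + 1 <= size C ->
  uniq [seq author c | c <- C] ->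
  (forall c, c \in C ->
     [/\ valid c, round c = r & certificate author round parents w c b]) ->
  forall x, valid x -> r < round x ->
    exists c, [/\ valid c, round c = r,
                  certificate author round parents w c b &
                  path_to parents x c].
Proof.
move=> [hb hpv hpr hpar hhon] _ hC uC hCc.
suff H : forall n x, valid x -> round x = r.+1 + n ->
    exists2 c, c \in C & path_to parents x c.
  move=> x vx rx; have [c cC pc] := H (round x - r.+1) x vx ltac:(lia).
  by have [? ? ?] := hCc c cC; exists c.
elim=> [|n IH] x vx rx.
  have hp := hpar x vx ltac:(lia).
  have [a [ha1 ha2 ha3]] := common_honest _ _ _ _ _ (leqnn _) hb (undup_uniq _) uC hp
     (leq_trans hC (eq_leq (esym (size_map _ _)))).
  move: ha1; rewrite mem_undup => /mapP [p]; rewrite mem_filter => /andP [rp pp] ap.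
  move: ha2 => /mapP [c cC ac].
  have [vc rc _] := hCc c cC.
  have vp := hpv x p vx pp.
  have epc : p = c.
    apply: hhon; [exact vp|exact vc|by rewrite -ap -ac|by rewrite -ap|rewrite rc (eqP rp) rx; lia].
  exists c => //; apply: (path_step pp); rewrite epc; exact: path_refl.
have hp := hpar x vx ltac:(lia).
have : 0 < size (undup [seq author p | p <- parents x & round p == (round x).-1]) by lia.
case E: (undup _) => [|a s] //= _.
have : a \in undup [seq author p | p <- parents x & round p == (round x).-1] by rewrite E mem_head.
rewrite mem_undup => /mapP [p]; rewrite mem_filter => /andP [rp pp] _.
have vp := hpv x p vx pp.
have [c cC pc] := IH p vp ltac:(rewrite (eqP rp) rx; lia).
by exists c => //; apply: (path_step pp).
Qed.
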